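(* Let $n,t,k$ be integers with $n\geq 2t\geq 4$ and $k\geq 2$. Then $A_k(n,0^t)\leq \beta_k(t)^n$, where $\beta_k(t)=k-(k-1)k^{-t-1}$.
   Context: Words are over $\Sigma_k=\{0,1,\ldots,k-1\}$, and $0^t$ is the word consisting of $t$ zeros. $A_k(m,v)$ denotes the number of words of length $m$ over $\Sigma_k$ that do not contain $v$ as a factor. *)

(* Defs.v *)
From mathcomp Require Import all_boot all_order all_algebra.
Set Implicit Arguments. Unset Strict Implicit. Unset Printing Implicit Defensive.
Import Order.TTheory GRing.Theory Num.Theory.

Definition has_factor (k : nat) (w v : seq 'I_k) : bool := infix v w.

(* The word 0^t over 'I_k (requires k >= 1 to have the letter 0;
   we index by k.+1 so that 0 exists). *)
Definition zeros (k t : nat) : seq 'I_k.+1 := nseq t ord0.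

Definition A (k m : nat) (v : seq 'I_k) : nat :=
  #|[set w : m.-tuple 'I_k | ~~ has_factor (val w) v]|.

Definition beta (k t : nat) : rat :=
  (k%:R - (k%:R - 1) / (k%:R ^+ t.+1))%R.

(* Main.v *)
Require Import Defs.
From mathcomp Require Import all_boot all_order all_algebra.
From mathcomp Require Import zify ring lra.
Import Order.TTheory GRing.Theory Num.Theory.
Set Implicit Arguments. Unset Strict Implicit. Unset Printing Implicit Defensive.

Section Words.
Variable L : nat.
Local Notation T := 'I_L.+1.

Definition C m (P : pred (seq T)) : nat := \sum_(w : m.-tuple T) P w.

Lemma C_S m P : C m.+1 P = \sum_(c : T) C m (fun s => P (c :: s)).
Proof.
rewrite /C (reindex (fun p : T * m.-tuple T => [tuple of p.1 :: p.2])) /=.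
  rewrite -(pair_big xpredT xpredT (fun c (w : m.-tuple T) => (P (c :: val w) : nat))) /=.
  by [].
exists (fun w : m.+1.-tuple T => (thead w, [tuple of behead w])).
  by case=> c w _ /=; rewrite theadE; congr pair; apply: val_inj.
by move=> w _; rewrite [in RHS](tuple_eta w); apply: val_inj.
Qed.

Lemma C_le m (P Q : pred (seq T)) : (forall s, P s -> Q s) -> C m P <= C m Q.
Proof.
move=> PQ; apply: leq_sum => w _; case: (boolP (P w)) => // /PQ ->. by [].
Qed.

Lemma C_split m (P Q : pred (seq T)) : C m (fun s => P s && Q s) + C m (fun s => P s && ~~ Q s) = C m P.
Proof.
rewrite /C -big_split /=; apply: eq_bigr => w _.
by case: (P w); case: (Q w).
Qed.

Lemma C_all m (P : pred (seq T)) : (forall s, size s = m -> P s) -> C m P = L.+1 ^ m.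
Proof.
move=> HP; rewrite /C (eq_bigr (fun _ => 1)) => [|w _]; last by rewrite HP // size_tuple.
by rewrite sum1_card card_tuple card_ord.
Qed.

Lemma C_compl m (P : pred (seq T)) : C m P + C m (fun s => ~~ P s) = L.+1 ^ m.
Proof.
have := C_split m (fun _ => true) P; rewrite (@C_all m (fun _ => true)) //.
Qed.

Lemma C_prefix (s : seq T) r (R : pred (seq T)) :
  C r (fun u => R (s ++ u)) <= C (size s + r) R.
Proof.
elim: s R => [|x s IH] R //=.
rewrite addSn C_S (bigD1 x) //=.
apply: leq_trans (leq_addr _ _).
exact: (IH (fun u => R (x :: u))).
Qed.

Lemma C_Sle m (P : pred (seq T)) : (forall c s, P (c :: s) -> P s) -> C m.+1 P <= L.+1 * C m P.
Proof.
move=> HP; rewrite C_S.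
apply: leq_trans (_ : \sum_(c : T) C m P <= _).
  apply: leq_sum => c _; apply: C_le => s; exact: HP.
by rewrite sum_nat_const card_ord.
Qed.


Variable t' : nat.
Local Notation Z := (nseq t'.+1 (ord0 : T)).
Definition av (s : seq T) : bool := ~~ infix Z s.
Definition a m := C m av.

Lemma F1 c s : c != ord0 -> infix Z (c :: s) = infix Z s.
Proof. by move=> hc; rewrite infix_consl /= eq_sym (negbTE hc). Qed.

Lemma F2 c s : av (c :: s) -> av s.
Proof. rewrite /av infix_consl; apply: contra => ->; exact: orbT. Qed.

Lemma F3 s : infix Z s -> t'.+1 <= size s.
Proof. by move/infixW/size_subseq; rewrite size_nseq. Qed.

Lemma F4p n j u c : c != ord0 -> j < n -> ~~ prefix (nseq n (ord0 : T)) (nseq j ord0 ++ c :: u).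
Proof.
move=> hc; elim: j n => [|j IH] [|n] //=.
  by move=> _; rewrite eq_sym (negbTE hc).
rewrite ltnS; exact: IH.
Qed.

Lemma F4 j u c : c != ord0 -> j < t'.+1 -> av u -> av (nseq j ord0 ++ c :: u).
Proof.
move=> hc; elim: j => [|j IH] hj hu.
  by rewrite /av F1.
rewrite /av; change (~~ infix Z (ord0 :: (nseq j ord0 ++ c :: u))).
rewrite infix_consl negb_or; apply/andP; split.
  exact: (@F4p t'.+1 j.+1 u c hc hj).
exact: IH (ltnW hj) hu.
Qed.

Lemma a_small j : j <= t' -> a j = L.+1 ^ j.
Proof.
move=> hj; apply: C_all => s hs; rewrite /av; apply/negP => /F3; rewrite hs; lia.
Qed.

Lemma a_t : a t'.+1 + 1 <= L.+1 ^ t'.+1.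
Proof.
rewrite -(C_compl t'.+1 av) leq_add2l.
have := C_prefix Z 0 (fun s => ~~ av s); rewrite size_nseq addn0.
apply: leq_trans; rewrite (@C_all 0) // => s /size0nil ->.
by rewrite /av negbK cats0 infix_refl.
Qed.

Lemma a_Sle m : a m.+1 <= L.+1 * a m.
Proof. apply: C_Sle; exact: F2. Qed.

Lemma a_rec m : t'.+1 <= m -> a m.+1 + L * a (m - t'.+1) <= L.+1 * a m.
Proof.
move=> hm; rewrite /a C_S (bigD1 ord0) //=.
have E1 : \sum_(c | c != ord0) C m (fun s => av (c :: s)) = L * C m av.
  rewrite (eq_bigr (fun _ => C m av)) => [|c hc]; last first.
    by apply: eq_bigr => w _; rewrite /av F1.
  by rewrite sum_nat_const cardC1 card_ord.
have E2 : C m (fun s => av (ord0 :: s)) = C m (fun s => av s && av (ord0 :: s)).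
  apply: eq_bigr => w _; case h: (av (ord0 :: val w)); last by rewrite andbF.
  by rewrite (F2 h).
have E3 : L * C (m - t'.+1) av <= C m (fun s => av s && ~~ av (ord0 :: s)).
  set r := m - t'.+1.
  have -> : m = size (nseq t' (ord0 : T)) + r.+1 by rewrite size_nseq /r; lia.
  apply: leq_trans (C_prefix _ _ _); rewrite C_S (bigD1 ord0) //=.
  apply: leq_trans (leq_addl _ _).
  have -> : L * C r av = \sum_(c : T | c != ord0) C r av.
    by rewrite sum_nat_const cardC1 card_ord.
  apply: leq_sum => c hc; apply: C_le => u hu; apply/andP; split.
    exact: F4.
  rewrite /av negbK; exact: (prefix_infix Z (c :: u)).
have := C_split m av (fun s => av (ord0 :: s)).
rewrite E1 E2; lia.
Qed.


Lemma a_iter p j : a (p + j) <= L.+1 ^ j * a p.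
Proof.
elim: j => [|j IH]; first by rewrite addn0 expn0 mul1n.
rewrite addnS expnS -mulnA; apply: leq_trans (a_Sle _) _; rewrite leq_mul2l IH orbT //.
Qed.

Lemma a_iv j : j <= t'.+1 ->
  L.+1 * a (t'.+1 + j) + L.+1 ^ j.+1 + j * L * L.+1 ^ j <= L.+1 ^ (t'.+1 + j).+1.
Proof.
elim: j => [|j IH] hj.
  have := a_t; rewrite addn0 !expnS expn0; nia.
have hr := a_rec (m := t'.+1 + j) (leq_addr _ _).
have IH' := IH (ltnW hj).
have hj' : j <= t' by lia.
rewrite addKn (a_small hj') in hr.
rewrite addnS.
move: hr IH'; set A1 := a _; set A0 := a _.
have e1 : L.+1 ^ j.+1 = L.+1 * L.+1 ^ j by rewrite expnS.
have e2 : L.+1 ^ j.+2 = L.+1 * (L.+1 * L.+1 ^ j) by rewrite !expnS.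
have e3 : L.+1 ^ (t'.+1 + j).+2 = L.+1 * L.+1 ^ (t'.+1 + j).+1 by rewrite expnS.
rewrite e1 e2 e3; set P := L.+1 ^ j; set Q := L.+1 ^ (t'.+1 + j).+1.
nia.
Qed.

Local Open Scope ring_scope.

Lemma bern (k x : rat) N : 0 <= x <= k ->
  (k ^+ N.+1 - N%:R * x * k ^+ N <= k * (k - x) ^+ N)%R.
Proof.
move=> /andP[x0 xk]; elim: N => [|N IH]; first by rewrite expr1 expr0 mul0r subr0 mulr1.
have kx : (0 <= k - x)%R by rewrite subr_ge0.
rewrite [(k - x) ^+ _]exprS mulrCA.
apply: le_trans (ler_wpM2l kx IH).
rewrite !exprS; set P := k ^+ N.
have P0 : (0 <= P)%R by rewrite exprn_ge0 // (le_trans x0 xk).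
rewrite -natr1.
have : (0 <= N%:R * (x * x) * P)%R by rewrite !mulr_ge0 // ler0n.
nra.
Qed.

Definition bet : rat := (L.+1%:R - L%:R / L.+1%:R ^+ t'.+2)%R.

Lemma bet_ge0 : (0 <= bet)%R.
Proof.
rewrite /bet subr_ge0.
have hp : (1 <= (L.+1%:R : rat) ^+ t'.+2)%R by rewrite exprn_ege1 // ler1n.
rewrite ler_pdivrMr; last by apply: lt_le_trans hp.
apply: le_trans (_ : L.+1%:R <= _)%R.
  by rewrite ler_nat.
by rewrite -{1}(mulr1 (L.+1%:R)) ler_wpM2l // ler0n.
Qed.

Lemma a_step m : (t'.+1 <= m)%N -> ((a m.+1)%:R <= bet * (a m)%:R :> rat)%R.
Proof.
move=> hm.
have h1 := a_rec hm.
have h2 := a_iter (m - t'.+1) t'.+1; rewrite subnK // in h2.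
have h3 : (L * a m <= L * a (m - t'.+1) * L.+1 ^ t'.+2)%N.
  rewrite -mulnA leq_mul2l; apply/orP; right.
  apply: leq_trans h2 _; rewrite [in X in (_ <= X)%N]expnS.
  set K1 := (L.+1 ^ t'.+1)%N; set A2 := a _; nia.
have [K2 eK2] : exists K2, K2 = (L.+1 ^ t'.+2)%N by eauto.
move: h1 h3; rewrite -eK2 -!(ler_nat rat) !natrM !natrD !natrM eK2 natrX.
set A1 := (a m.+1)%:R; set A0 := (a m)%:R; set A2 := (a _)%:R.
set p := (L.+1%:R ^+ t'.+2 : rat).
have p0 : (0 < p)%R by rewrite exprn_gt0 // ltr0n.
move=> h1 h3.
have h4 : (L%:R / p * A0 <= L%:R * A2 :> rat)%R.
  by rewrite mulrAC ler_pdivrMr.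
rewrite /bet mulrBl; lra.
Qed.

Lemma a_base : (0 < L)%N ->
  ((a (t'.+1 + t'.+1))%:R <= bet ^+ (t'.+1 + t'.+1) :> rat).
Proof.
move=> hL.
have hn : (L.+1 * a (t'.+1 + t'.+1) + (t'.+1 + t'.+1) * L * L.+1 ^ t'
           <= L.+1 ^ (t'.+1 + t'.+1).+1)%N.
  have := a_iv (leqnn t'.+1).
  have e1 : (L.+1 ^ t'.+2 = L.+1 * (L.+1 * L.+1 ^ t'))%N by rewrite !expnS.
  have e2 : (L.+1 ^ t'.+1 = L.+1 * L.+1 ^ t')%N by rewrite !expnS.
  rewrite e1 e2; set P := (L.+1 ^ t')%N; set Q := (L.+1 ^ _)%N; set A := a _.
  nia.
set N := (t'.+1 + t'.+1)%N.
have eN : N = (t' + t'.+2)%N by rewrite /N; lia.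
have [P eP] : exists P, P = (L.+1 ^ t')%N by eauto.
have [QN eQN] : exists Q, Q = (L.+1 ^ N.+1)%N by eauto.
move: hn; rewrite -eP -eQN -(ler_nat rat) natrD !natrM eP eQN !natrX -/N.
set k : rat := L.+1%:R.
have k0 : (0 < k)%R by rewrite ltr0n.
have xk : (0 <= L%:R / k ^+ t'.+2 <= k)%R.
  apply/andP; split; first by rewrite divr_ge0 // ?ler0n // exprn_ge0 // ltW.
  have hp : (1 <= k ^+ t'.+2)%R by rewrite exprn_ege1 // ler1n.
  rewrite ler_pdivrMr; last by apply: lt_le_trans hp.
  apply: le_trans (_ : k <= _)%R; first by rewrite ler_nat.
  by rewrite -{1}(mulr1 k) ler_wpM2l // ltW.
have hb := bern N xk.
have e : (N%:R * (L%:R / k ^+ t'.+2) * k ^+ N = N%:R * L%:R * k ^+ t' :> rat)%R.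
  rewrite eN exprD; field; by rewrite expf_neq0 // gt_eqF.
rewrite e -/bet in hb => hn.
have : (k * (a N)%:R <= k * bet ^+ N)%R.
  apply: le_trans hb; lra.
by rewrite ler_pM2l.
Qed.

Lemma a_final d : (0 < L)%N ->
  ((a (t'.+1 + t'.+1 + d))%:R <= bet ^+ (t'.+1 + t'.+1 + d) :> rat).
Proof.
move=> hL; elim: d => [|d IH]; first by rewrite addn0; exact: a_base.
rewrite addnS exprS.
apply: le_trans (a_step _) _; first by lia.
by rewrite ler_wpM2l // bet_ge0.
Qed.

End Words.
Lemma bridge K t' n :
  A n (nseq t'.+1 (ord0 : 'I_K.+1)) = a K t' n.
Proof.
rewrite /A /a /C -sum1_card big_mkcond; apply: eq_bigr => w _.
by rewrite inE /has_factor /av; case: infix.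
Qed.

Unset Implicit Arguments.
Set Strict Implicit.

Theorem lemma14 (n t k : nat) (ht : 2 <= t) (hn : 2 * t <= n) (hk : 2 <= k) :
  ((A n (zeros k.-1 t))%:R <= beta k t ^+ n :> rat)%R.
Proof.
case: k hk => [|[|K]] // _.
case: t ht hn => [|t'] // ht hn.
rewrite /zeros /= bridge.
have eb : beta K.+2 t'.+1 = bet K.+1 t'.
  rewrite /beta /bet; congr (_ - _ / _)%R.
  by rewrite -natr1 addrK.
rewrite eb.
have -> : n = (t'.+1 + t'.+1 + (n - (t'.+1 + t'.+1)))%N by lia.
exact: a_final.
Qed.
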